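(* Let $\mathbb F$ be an algebraically closed field of characteristic $p\neq 2$, let $S=\{R_0,\dots,R_d\}$ be a quasi-thin scheme on $X$ with $\mathcal A_2=\{a\in\{0,\dots,d\}:k_a=2\}\neq\varnothing$, let $x\in X$ and $\mathcal T=\mathcal T(x)$. Define the relation $\sim$ on $\mathcal A_2$ by $b\sim c$ if and only if $|R_{b'}R_c|=2$ or $(b,c)$ is a bad pair of $S$ (this is an equivalence relation), and let $\mathcal C_0,\dots,\mathcal C_\gamma$ be its distinct equivalence classes. Then $\mathcal T\cong M_{d+1}(\mathbb F)\oplus\bigoplus_{a=0}^{\gamma}M_{|\mathcal C_a|}(\mathbb F)$ as $\mathbb F$-algebras, where $M_n(\mathbb F)$ is the algebra of $n\times n$ matrices over $\mathbb F$.
   Context: Let $X$ be a nonempty finite set. A scheme of class $d$ on $X$ is a partition $S=\{R_0,\dots,R_d\}$ of $X\times X$ into nonempty sets such that $R_0=\{(b,b):b\in X\}$; for each $c$ there is $c'$ with $R_{c'}=\{(f,e):(e,f)\in R_c\}$; and for all $i,j,k$ the intersection number $p_{ij}^k=|\{\ell\in X:(m,\ell)\in R_i,(\ell,n)\in R_j\}|$ does not depend on $(m,n)\in R_k$. The valency is $k_a=p_{aa'}^0$; quasi-thin means all $k_a\le 2$; complex product $R_aR_b=\{R_c:p_{ab}^c>0\}$. For $y\in X$, $yR_a=\{z:(y,z)\in R_a\}$; $A_a\in M_X(\mathbb F)$ is the $(0,1)$ adjacency matrix of $R_a$, $E_a^*(y)$ is the diagonal $(0,1)$-matrix with ones exactly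 at positions indexed by $yR_a$, and $\mathcal T(y)$ is the $\mathbb F$-subalgebra of $M_X(\mathbb F)$ generated by $A_0,\dots,A_d,E_0^*(y),\dots,E_d^*(y)$. Bad pair: $(u,v)$ is a bad pair of $S$ if there exist an integer $a\ge1$ and $R_{i_b},R_{j_b},R_{\ell_b}\in S$ ($b=0,\dots,a$) with $i_0=u$, $\ell_a=v$, $k_{i_b}=k_{\ell_b}=2$ and $p_{i_bj_b}^{\ell_b}=1$ for all $b$, $\ell_c=i_{c+1}$ for $0\le c\le a-1$, and $|R_{u'}R_v|=1$. *)

(* Defs.v *)
From HB Require Import structures.
From mathcomp Require Import all_boot all_order all_algebra all_field.
Set Implicit Arguments. Unset Strict Implicit. Unset Printing Implicit Defensive.
Import GRing.Theory.
Section Scheme.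
Variables (X : finType) (d : nat).
(* A scheme of class d on X is encoded by the map r sending (m,n) to the
   index c such that (m,n) \in R_c. *)
Variable r : X -> X -> 'I_d.+1.

Definition pnum (i j : 'I_d.+1) (m n : X) : nat :=
  #|[set l | (r m l == i) && (r l n == j)]|.

Definition is_scheme : Prop :=
  [/\ (forall c, exists m n, r m n = c),
      (forall m n, (r m n == ord0) = (m == n)),
      (forall c, exists c', forall m n, r m n = c' <-> r n m = c)
    & (forall i j m n m' n', r m n = r m' n' -> pnum i j m n = pnum i j m' n')].

Definition trn (c : 'I_d.+1) : 'I_d.+1 :=
  if [pick mn : X * X | r mn.1 mn.2 == c] is Some mn then r mn.2 mn.1 else c.

Definition pint (i j k : 'I_d.+1) : nat :=
  if [pick mn : X * X | r mn.1 mn.2 == k] is Some mn then pnum i j mn.1 mn.2 else 0.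

Definition valency (a : 'I_d.+1) : nat := pint a (trn a) ord0.

Definition quasi_thin : Prop := forall a, valency a <= 2.

Definition cprod (a b : 'I_d.+1) : {set 'I_d.+1} := [set c | 0 < pint a b c].

Definition bad_pair (u v : 'I_d.+1) : Prop :=
  (exists (a : nat) (i j l : nat -> 'I_d.+1),
     [/\ 1 <= a, i 0 = u, l a = v,
         (forall b, b <= a ->
            [/\ valency (i b) = 2, valency (l b) = 2 & pint (i b) (j b) (l b) = 1])
       & (forall c, c < a -> l c = i c.+1)])
  /\ #|cprod (trn u) v| = 1.

Definition A2 (a : 'I_d.+1) : Prop := valency a = 2.

Definition sim (b c : 'I_d.+1) : Prop :=
  #|cprod (trn b) c| = 2 \/ bad_pair b c.

Definition is_class (C : {set 'I_d.+1}) : Prop :=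
  exists b, A2 b /\ forall c, c \in C <-> (A2 c /\ sim b c).

End Scheme.

Local Open Scope ring_scope.

Inductive gen_alg (F : fieldType) (n : nat) (G : 'M[F]_n -> Prop) : 'M[F]_n -> Prop :=
| ga_gen A : G A -> gen_alg G A
| ga_one : gen_alg G 1%:M
| ga_add A B : gen_alg G A -> gen_alg G B -> gen_alg G (A + B)
| ga_scale (c : F) A : gen_alg G A -> gen_alg G (c *: A)
| ga_mul A B : gen_alg G A -> gen_alg G B -> gen_alg G (A *m B).

Section Terwilliger.
Variables (F : fieldType) (X : finType) (d : nat) (r : X -> X -> 'I_d.+1).

(* M_X(F) is realised as 'M[F]_#|X|, rows/columns indexed via enum_val. *)
Definition adjmx (a : 'I_d.+1) : 'M[F]_#|X| :=
  \matrix_(i, j) ((r (enum_val i) (enum_val j) == a)%:R).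

Definition dualidm (y : X) (a : 'I_d.+1) : 'M[F]_#|X| :=
  \matrix_(i, j) (((i == j) && (r y (enum_val i) == a))%:R).

Definition terw (y : X) : 'M[F]_#|X| -> Prop :=
  gen_alg (fun M => exists a, M = adjmx a \/ M = dualidm y a).
End Terwilliger.

Definition alg_hom_on (F : fieldType) (n m : nat) (T : 'M[F]_n -> Prop)
  (f : 'M[F]_n -> 'M[F]_m) : Prop :=
  [/\ f 1%:M = 1%:M,
      (forall A B, T A -> T B -> f (A + B) = f A + f B),
      (forall (c : F) A, T A -> f (c *: A) = c *: f A)
    & (forall A B, T A -> T B -> f (A *m B) = f A *m f B)].

(* Submission.v *)
Require Import Defs.
From HB Require Import structures.
From mathcomp Require Import all_boot all_order all_algebra all_field.
From mathcomp Require Import ring.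
From Stdlib Require Import IndefiniteDescription.

Module SubmissionDev.
Set Implicit Arguments. Unset Strict Implicit. Unset Printing Implicit Defensive.

Section Comb.
Variables (X : finType) (d : nat) (r : X -> X -> 'I_d.+1) (x : X).
Hypothesis Hs : is_scheme r.
Hypothesis Hqt : quasi_thin r.

Lemma r_nonempty c : exists m n, r m n = c.
Proof. by case: Hs. Qed.

Lemma r_diag m n : (r m n == ord0) = (m == n).
Proof. by case: Hs. Qed.

Lemma r_reg i j m n m' n' : r m n = r m' n' -> pnum r i j m n = pnum r i j m' n'.
Proof. by case: Hs => _ _ _; apply. Qed.

Lemma r_tr c : exists c', forall m n, r m n = c' <-> r n m = c.
Proof. by case: Hs. Qed.

Lemma r_trans m n m' n' : r m n = r m' n' -> r n m = r n' m'.
Proof.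
move=> E; have [c' Hc] := r_tr (r m n).
have h1 : r n m = c' by apply/Hc.
have h2 : r n' m' = c' by apply/Hc; rewrite E.
by rewrite h1 h2.
Qed.

Lemma r_trans_eq m n m' n' : (r n m == r n' m') = (r m n == r m' n').
Proof. by apply/eqP/eqP => /r_trans. Qed.

Lemma trnP c m n : (r m n == trn r c) = (r n m == c).
Proof.
rewrite /trn; case: pickP => [[m' n'] /= /eqP <-|H].
  by rewrite r_trans_eq.
have [m0 [n0 E]] := r_nonempty c.
by move: (H (m0, n0)); rewrite /= E eqxx.
Qed.

Definition Xr a := [set y | r x y == a].

Lemma pnum_tr a m : pnum r a (trn r a) m m = #|[set l | r m l == a]|.
Proof. by rewrite /pnum; apply: eq_card => l; rewrite !inE trnP andb_idr // => /eqP->. Qed.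

Lemma cardR m a : #|[set l | r m l == a]| = #|Xr a|.
Proof.
rewrite /Xr -!pnum_tr; apply: r_reg.
by apply/eqP; rewrite -(inj_eq val_inj) /=; move: (r_diag m m) (r_diag x x); rewrite !eqxx => /eqP -> /eqP ->.
Qed.

Lemma valE a : valency r a = #|Xr a|.
Proof.
rewrite /valency /pint; case: pickP => [[m n] /= /eqP E|H].
  have /eqP mn : m == n by rewrite -r_diag E.
  by rewrite -mn pnum_tr cardR.
by move: (H (x, x)); rewrite /= r_diag eqxx.
Qed.

Lemma Xr_gt0 a : 0 < #|Xr a|.
Proof.
have [m [n E]] := r_nonempty a; rewrite -(cardR m); apply/card_gt0P; exists n.
by rewrite inE E.
Qed.

Lemma Xr_le2 a : #|Xr a| <= 2.
Proof. by rewrite -valE; apply: Hqt. Qed.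

Lemma A2E a : A2 r a <-> #|Xr a| = 2.
Proof. by rewrite /A2 valE. Qed.

Lemma row_lemma l e y y' : r x y = r x y' ->
  #|[set z | (r x z == l) && (r y z == e)]| = #|[set z | (r x z == l) && (r y' z == e)]|.
Proof.
move=> E; have [l' Hl] := r_tr l.
have eqs w : [set z | (r x z == l) && (r w z == e)] = [set z | (r w z == e) && (r z x == l')].
  apply/setP => z; rewrite !inE andbC; congr (_ && _).
  by apply/eqP/eqP => [?|/Hl]; [apply/Hl|].
rewrite !eqs; apply: (r_reg e l'); exact: r_trans.
Qed.

Lemma col_lemma i e z z' : r x z = r x z' ->
  #|[set y | (r x y == i) && (r y z == e)]| = #|[set y | (r x y == i) && (r y z' == e)]|.
Proof. move=> E; exact: (r_reg i e E). Qed.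


Definition rep a := odflt x [pick y in Xr a].
Definition oth a := odflt x [pick y in Xr a :\ rep a].

Lemma rep_in a : r x (rep a) = a.
Proof.
rewrite /rep; case: pickP => [y|H] /=; first by rewrite inE => /eqP.
by have /card_gt0P [y] := Xr_gt0 a; rewrite H.
Qed.

Lemma oth_in a : #|Xr a| = 2 -> r x (oth a) = a /\ oth a != rep a.
Proof.
move=> H2; rewrite /oth; case: pickP => [y|H] /=; first by rewrite !inE => /andP [-> /eqP].
have : 0 < #|Xr a :\ rep a|.
  move: H2; rewrite (cardsD1 (rep a)) inE rep_in eqxx => /eqP.
  by rewrite eqSS => /eqP ->.
by case/card_gt0P => y; rewrite H.
Qed.

Lemma two_elems a y y' z : r x y = a -> r x y' = a -> y != y' -> r x z = a -> z = y \/ z = y'.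
Proof.
move=> Hy Hy' ne Hz.
have sub : [set y; y'] \subset Xr a by apply/subsetP => w; rewrite !inE => /orP [] /eqP ->; apply/eqP.
have : [set y; y'] = Xr a.
  apply/eqP; rewrite eqEcard sub /= cards2 ne.
  exact: Xr_le2.
move/setP/(_ z); rewrite !inE Hz eqxx.
by case/orP => /eqP; auto.
Qed.

Lemma Xr2_cases a z : #|Xr a| = 2 -> r x z = a -> z = rep a \/ z = oth a.
Proof.
move=> H2 Hz; have [o1 o2] := oth_in H2.
apply: (two_elems (a := a)) => //; [exact: rep_in| by rewrite eq_sym].
Qed.

Definition E m l := [exists y, exists p, exists q,
  [&& r x y == m, r x p == l, r x q == l & r y p != r y q]].

Lemma set_eq_card (S : {set X}) a : S \subset Xr a -> #|S| = #|Xr a| -> S = Xr a.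
Proof. by move=> sub c; apply/eqP; rewrite eqEcard sub c leqnn. Qed.

Lemma E_rows m l y p q : E m l -> r x y = m -> r x p = l -> r x q = l -> p != q ->
  r y p != r y q.
Proof.
case/existsP=> y0 /existsP [p0 /existsP [q0 /and4P [/eqP Hy0 /eqP Hp0 /eqP Hq0 ne0]]].
move=> Hy Hp Hq npq; apply/negP => /eqP Eq.
set e := r y p.
have allz z : r x z = l -> r y z = e.
  by move=> Hz; case: (two_elems Hp Hq npq Hz) => ->.
have S1 : [set z | (r x z == l) && (r y z == e)] = Xr l.
  by apply/setP => z; rewrite !inE; case: eqP => //= /allz ->; rewrite eqxx.
have := row_lemma l e (y := y) (y' := y0); rewrite Hy Hy0 S1 => /(_ erefl) /esym.
move/set_eq_card => S2.
have : [set z | (r x z == l) && (r y0 z == e)] = Xr l.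
  by apply: S2; apply/subsetP => z; rewrite !inE => /andP [].
move/setP => S3; move: (S3 p0) (S3 q0); rewrite !inE Hp0 Hq0 eqxx /= => /eqP e1 /eqP e2.
by rewrite e1 e2 eqxx in ne0.
Qed.

Definition Ec m l := [exists z, exists y, exists y',
  [&& r x z == l, r x y == m, r x y' == m & r y z != r y' z]].

Lemma E_Ec m l : E m l -> Ec m l.
Proof.
case/existsP=> y0 /existsP [p0 /existsP [q0 /and4P [/eqP Hy0 /eqP Hp0 /eqP Hq0 ne0]]].
set e := r y0 p0.
have := col_lemma m e (z := p0) (z' := q0); rewrite Hp0 Hq0 => /(_ erefl) c.
have : 0 < #|[set y | (r x y == m) && (r y q0 == e)]|.
  by rewrite -c; apply/card_gt0P; exists y0; rewrite !inE Hy0 !eqxx.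
case/card_gt0P => y1; rewrite !inE => /andP [/eqP Hy1 /eqP e1].
apply/existsP; exists q0; apply/existsP; exists y1; apply/existsP; exists y0.
rewrite Hq0 Hy1 Hy0 !eqxx e1 /=; exact: ne0.
Qed.

Lemma Ec_E m l : Ec m l -> E l m.
Proof.
case/existsP=> z /existsP [y /existsP [y' /and4P [Hz Hy Hy' ne]]].
apply/existsP; exists z; apply/existsP; exists y; apply/existsP; exists y'.
by rewrite Hz Hy Hy' /= r_trans_eq.
Qed.

Lemma E_sym m l : E m l -> E l m.
Proof. by move/E_Ec/Ec_E. Qed.

Lemma E_A2r m l : E m l -> #|Xr l| = 2.
Proof.
case/existsP=> y0 /existsP [p0 /existsP [q0 /and4P [/eqP Hy0 /eqP Hp0 /eqP Hq0 ne0]]].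
apply/eqP; rewrite eqn_leq Xr_le2 /=.
have npq : p0 != q0 by apply: contraNneq ne0 => ->.
have : [set p0; q0] \subset Xr l by apply/subsetP => w; rewrite !inE => /orP [] /eqP ->; apply/eqP.
by move/subset_leq_card; rewrite cards2 npq.
Qed.

Lemma E_A2l m l : E m l -> #|Xr m| = 2.
Proof. by move/E_sym/E_A2r. Qed.

Lemma E_refl b : #|Xr b| = 2 -> E b b.
Proof.
move=> H2; have [o1 o2] := oth_in H2.
apply/existsP; exists (rep b); apply/existsP; exists (rep b); apply/existsP; exists (oth b).
rewrite rep_in o1 eqxx /=; apply/negP => /eqP e.
have : r (rep b) (rep b) == ord0 by rewrite r_diag.
by rewrite e r_diag eq_sym (negbTE o2).
Qed.

Lemma cprodP b c e : (e \in cprod r (trn r b) c) =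
  [exists y, exists z, [&& r x y == b, r x z == c & r y z == e]].
Proof.
rewrite /cprod inE /pint; case: pickP => [[m n] /= /eqP Emn|H].
  apply/idP/idP.
    case/card_gt0P => l; rewrite inE => /andP [Hl1 /eqP Hl2].
    rewrite trnP in Hl1.
    have : 0 < pnum r b e x (rep c).
      rewrite (r_reg b e (m' := l) (n' := n)); last by rewrite rep_in.
      by apply/card_gt0P; exists m; rewrite inE Hl1 Emn eqxx.
    case/card_gt0P => y; rewrite inE => /andP [Hy Hyz].
    by apply/existsP; exists y; apply/existsP; exists (rep c); rewrite Hy rep_in eqxx.
  case/existsP => y /existsP [z /and3P [Hy Hz /eqP Hyz]].
  rewrite (r_reg _ _ (m' := y) (n' := z)); last by rewrite Emn.
  by apply/card_gt0P; exists x; rewrite inE trnP Hy.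
apply/esym/negbTE/negP; case/existsP => y /existsP [z /and3P [_ _ /eqP Hyz]].
by move: (H (y, z)); rewrite /= Hyz eqxx.
Qed.

Lemma cprod_E2 b c : E b c -> #|cprod r (trn r b) c| = 2.
Proof.
move=> HE; have Hc := E_A2r HE; have Hb := E_A2l HE.
have [o1 o2] := oth_in Hc.
set y := rep b; set a1 := r y (rep c); set a2 := r y (oth c).
have ne : a1 != a2 by apply: (E_rows HE); rewrite ?rep_in // eq_sym.
suff -> : cprod r (trn r b) c = [set a1; a2] by rewrite cards2 ne.
apply/setP => e; rewrite cprodP !inE; apply/idP/idP.
  case/existsP => y' /existsP [z' /and3P [/eqP Hy' /eqP Hz' /eqP Hyz]].
  have := row_lemma c e (y := y') (y' := y); rewrite Hy' rep_in => /(_ erefl) rl.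
  have : 0 < #|[set z | (r x z == c) && (r y z == e)]|.
    by rewrite -rl; apply/card_gt0P; exists z'; rewrite inE Hz' Hyz !eqxx.
  case/card_gt0P => z''; rewrite inE => /andP [/eqP Hz'' /eqP <-].
  by case: (Xr2_cases Hc Hz'') => ->; rewrite eqxx ?orbT.
case/orP => /eqP ->; apply/existsP; exists y; apply/existsP.
  by exists (rep c); rewrite !rep_in !eqxx.
by exists (oth c); rewrite rep_in o1 !eqxx.
Qed.

Lemma cprod_nE1 b c : ~~ E b c -> #|cprod r (trn r b) c| = 1.
Proof.
move=> nE.
have rowc y p q : r x y = b -> r x p = c -> r x q = c -> r y p = r y q.
  move=> Hy Hp Hq; apply/eqP; apply: contraNT nE => ne.
  by apply/existsP; exists y; apply/existsP; exists p; apply/existsP; exists q; rewrite Hy Hp Hq !eqxx.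
have colc z y y' : r x z = c -> r x y = b -> r x y' = b -> r y z = r y' z.
  move=> Hz Hy Hy'; apply/eqP; apply: contraNT nE => ne; apply: E_sym; apply: Ec_E.
  by apply/existsP; exists z; apply/existsP; exists y; apply/existsP; exists y'; rewrite Hz Hy Hy' !eqxx.
suff -> : cprod r (trn r b) c = [set r (rep b) (rep c)] by rewrite cards1.
apply/setP => e; rewrite cprodP !inE; apply/idP/idP.
  case/existsP => y' /existsP [z' /and3P [/eqP Hy' /eqP Hz' /eqP <-]].
  by rewrite (rowc y' z' (rep c)) ?rep_in // (colc (rep c) y' (rep b)) ?rep_in.
move/eqP ->; apply/existsP; exists (rep b); apply/existsP; exists (rep c).
by rewrite !rep_in !eqxx.
Qed.


Lemma pint_x i j l : pint r i j l = pnum r i j x (rep l).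
Proof.
rewrite /pint; case: pickP => [[m n] /= /eqP Emn|H].
  by apply: r_reg; rewrite Emn rep_in.
by move: (H (x, rep l)); rewrite /= rep_in eqxx.
Qed.

Lemma pint_E i j l : #|Xr i| = 2 -> pint r i j l = 1 -> E i l.
Proof.
move=> H2; rewrite pint_x /pnum => c1.
have [o1 o2] := oth_in H2.
apply: E_sym; apply: Ec_E; apply/existsP; exists (rep l); apply/existsP; exists (rep i).
apply/existsP; exists (oth i); rewrite !rep_in o1 !eqxx /=.
apply/negP => /eqP eq.
case hj: (r (rep i) (rep l) == j).
  have : [set rep i; oth i] \subset [set l0 | (r x l0 == i) && (r l0 (rep l) == j)].
    apply/subsetP => w; rewrite !inE => /orP [] /eqP ->; rewrite ?rep_in ?o1 eqxx ?hj //.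
    by rewrite -eq hj.
  by move/subset_leq_card; rewrite c1 cards2 eq_sym o2.
have : [set l0 | (r x l0 == i) && (r l0 (rep l) == j)] = set0.
  apply/setP => w; rewrite !inE; apply/negP => /andP [/eqP Hw Hj].
  by case: (Xr2_cases H2 Hw) => Ew; rewrite Ew -?eq in Hj; rewrite Hj in hj.
by move=> e0; rewrite e0 cards0 in c1.
Qed.

Lemma E_pint i l : E i l -> exists j, pint r i j l = 1.
Proof.
move=> HE; have H2 := E_A2l HE; have Hl := E_A2r HE.
have [o1 o2] := oth_in H2.
have ne : r (rep i) (rep l) != r (oth i) (rep l).
  rewrite -r_trans_eq; apply: (E_rows (E_sym HE)); rewrite ?rep_in //; by rewrite eq_sym.
exists (r (rep i) (rep l)); rewrite pint_x /pnum.
suff -> : [set l0 | (r x l0 == i) && (r l0 (rep l) == r (rep i) (rep l))] = [set rep i] by rewrite cards1.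
apply/setP => w; rewrite !inE; apply/idP/idP.
  case/andP => /eqP Hw /eqP Hj; case: (Xr2_cases H2 Hw) => Ew; rewrite Ew ?eqxx //.
  by rewrite -Ew Hj eqxx in ne.
by move/eqP ->; rewrite rep_in !eqxx.
Qed.

Definition Erel := [rel m l | E m l].

Lemma Erel_sym : symmetric Erel.
Proof. by move=> m l; apply/idP/idP => /E_sym. Qed.

Lemma sim_connect b c : #|Xr b| = 2 -> #|Xr c| = 2 -> sim r b c <-> connect Erel b c.
Proof.
move=> Hb Hc; split.
  case=> [H2|[[a [i [j [l [a1 i0 la steps links]]]]] _]].
    case hE: (E b c); first by apply: connect1.
    by move: H2; rewrite cprod_nE1 ?hE.
  have stepE k : k <= a -> E (i k) (l k).
    move=> kle; have [v1 _ p1] := steps k kle.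
    by apply: (pint_E (j := j k)) => //; rewrite -valE.
  suff : forall k, k <= a -> connect Erel b (l k) by move/(_ a (leqnn a)); rewrite la.
  elim=> [_|k IH ks].
    by apply: connect1; rewrite -i0; apply: stepE.
  apply: (connect_trans (IH (ltnW ks))); apply: connect1.
  by rewrite links //=; apply: stepE.
move=> Hcon.
case hE: (E b c); first by left; apply: cprod_E2.
right; split; last by apply: cprod_nE1; rewrite hE.
case/connectP: Hcon => p pth lst.
case: p pth lst => [|v1 p] pth lst.
  by move: hE; rewrite /= in lst; rewrite lst (E_refl Hb).
case: p pth lst => [|v2 p] pth lst.
  by move: pth; rewrite /= in lst; rewrite /= -lst hE.
set s := [:: b, v1, v2 & p].
exists (size p).+1, (fun k => nth b s k),
  (fun k => odflt ord0 [pick j | pint r (nth b s k) j (nth b s k.+1) == 1]),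
  (fun k => nth b s k.+1).
have hp k : k <= (size p).+1 -> E (nth b s k) (nth b s k.+1).
  by move=> kle; move/(pathP b): pth => /(_ k); apply.
split=> //.
- by rewrite lst (last_nth b).
- move=> k kle; have HE := hp k kle.
  rewrite !valE (E_A2l HE) (E_A2r HE); split=> //.
  case: pickP => [j /eqP //|H]; have [j Hj] := E_pint HE.
  by move: (H j); rewrite Hj eqxx.
Qed.

Lemma sim_refl b : #|Xr b| = 2 -> sim r b b.
Proof. by move=> H; apply/sim_connect => //; apply: connect0. Qed.

Lemma sim_sym b c : #|Xr b| = 2 -> #|Xr c| = 2 -> sim r b c -> sim r c b.
Proof.
move=> Hb Hc /sim_connect -/(_ Hb Hc) H; apply/sim_connect => //.
by rewrite (sym_connect_sym Erel_sym).
Qed.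

Lemma sim_trans b c e : #|Xr b| = 2 -> #|Xr c| = 2 -> #|Xr e| = 2 ->
  sim r b c -> sim r c e -> sim r b e.
Proof.
move=> Hb Hc He /sim_connect -/(_ Hb Hc) H1 /sim_connect -/(_ Hc He) H2.
by apply/sim_connect => //; apply: connect_trans H1 H2.
Qed.


Variable F : fieldType.
Import GRing.Theory.
Local Open Scope ring_scope.
Hypothesis H2F : (2%:R : F) != 0.

Local Notation n := #|X|.
Local Notation A_ a := (@adjmx F X d r a).
Local Notation E_ a := (@dualidm F X d r x a).

Definition ev (v : 'cV[F]_n) (y : X) : F := v (enum_rank y) 0.
Definition mkv (f : X -> F) : 'cV[F]_n := \col_k f (enum_val k).

Lemma evK f y : ev (mkv f) y = f y.
Proof. by rewrite /ev /mkv mxE enum_rankK. Qed.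

Lemma vec_ext (u v : 'cV[F]_n) : (forall y, ev u y = ev v y) -> u = v.
Proof.
move=> H; apply/matrixP => i j; rewrite (ord1 j).
by move: (H (enum_val i)); rewrite /ev enum_valK.
Qed.

Lemma sum_ord_X (G : 'I_n -> F) : \sum_k G k = \sum_z G (enum_rank z).
Proof.
rewrite (reindex enum_rank) //; exists enum_val => k _; [exact: enum_rankK|exact: enum_valK].
Qed.

Lemma ev_mul (M : 'M[F]_n) v y : ev (M *m v) y = \sum_z M (enum_rank y) (enum_rank z) * ev v z.
Proof. by rewrite /ev mxE sum_ord_X. Qed.

Lemma ev_add u v y : ev (u + v) y = ev u y + ev v y.
Proof. by rewrite /ev mxE. Qed.

Lemma ev_scale c v y : ev (c *: v) y = c * ev v y.
Proof. by rewrite /ev mxE. Qed.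

Lemma ev_opp v y : ev (- v) y = - ev v y.
Proof. by rewrite /ev mxE. Qed.

Lemma ev0 y : ev 0 y = 0.
Proof. by rewrite /ev mxE. Qed.

Lemma ev_sum I (s : seq I) (P : pred I) (G : I -> 'cV[F]_n) y :
  ev (\sum_(i <- s | P i) G i) y = \sum_(i <- s | P i) ev (G i) y.
Proof. by rewrite /ev summxE. Qed.

Lemma ev_adj a v y : ev (A_ a *m v) y = \sum_z (r y z == a)%:R * ev v z.
Proof. by rewrite ev_mul; apply: eq_bigr => z _; rewrite /adjmx mxE !enum_rankK. Qed.

Lemma ev_dual a v y : ev (E_ a *m v) y = (r x y == a)%:R * ev v y.
Proof.
rewrite ev_mul (bigD1 y) //= big1 ?addr0.
  by rewrite /dualidm mxE eqxx enum_rankK.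
move=> z nz; rewrite /dualidm mxE (inj_eq enum_rank_inj) eq_sym (negbTE nz) /=.
by rewrite mul0r.
Qed.

Lemma sum_blocks (f : X -> F) : \sum_z f z = \sum_l \sum_(z in Xr l) f z.
Proof.
rewrite (partition_big (fun z => r x z) predT) //=; apply: eq_bigr => l _.
by apply: eq_bigl => z; rewrite /Xr inE.
Qed.

Lemma sum_nat_card (B : {set X}) (P : pred X) :
  \sum_(z in B) (P z)%:R = (#|[set z in B | P z]|)%:R :> F.
Proof.
rewrite -natr_sum; congr (_%:R); rewrite -sum1_card big_mkcond /= [RHS]big_mkcond /=.
by apply: eq_bigr => z _; rewrite !inE; case: (z \in B); case: (P z).
Qed.

Lemma sum_eq1 (B : {set X}) c : \sum_(y in B) (y == c)%:R = (c \in B)%:R :> F.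
Proof.
case: (boolP (c \in B)) => h.
  rewrite (bigD1 c) //= eqxx big1 ?addr0 // => y /andP [_ /negbTE ->]; by [].
rewrite big1 // => y yB; case: eqP => // e; by rewrite -e yB in h.
Qed.

Definition inV0 (v : 'cV[F]_n) := forall y y', r x y = r x y' -> ev v y = ev v y'.
Definition bs0 (v : 'cV[F]_n) := forall a, \sum_(y in Xr a) ev v y = 0.
Definition supp (S : {set 'I_d.+1}) (v : 'cV[F]_n) := forall y, r x y \notin S -> ev v y = 0.
Definition closedS (S : {set 'I_d.+1}) := forall y p q, r x p = r x q -> r x p \in S ->
  r y p != r y q -> r x y \in S.

Definition Good (M : 'M[F]_n) :=
  [/\ forall v, inV0 v -> inV0 (M *m v), forall v, bs0 v -> bs0 (M *m v)
    & forall S, closedS S -> forall v, bs0 v -> supp S v -> supp S (M *m v)].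

Lemma adj_Good a : Good (A_ a).
Proof.
split.
- move=> v Hv y y' e; rewrite !ev_adj !sum_blocks; apply: eq_bigr => l _.
  have H z : z \in Xr l -> ev v z = ev v (rep l).
    by rewrite inE => /eqP Hz; apply: Hv; rewrite rep_in.
  rewrite (eq_bigr (fun z => (r y z == a)%:R * ev v (rep l))); last by move=> z /H ->.
  rewrite [RHS](eq_bigr (fun z => (r y' z == a)%:R * ev v (rep l))); last by move=> z /H ->.
  rewrite -!mulr_suml !sum_nat_card; congr (_%:R * _).
  have cE w : [set z in Xr l | r w z == a] = [set z | (r x z == l) && (r w z == a)].
    by apply/setP => z; rewrite !inE.
  by rewrite !cE; apply: row_lemma.
- move=> v Hv m; rewrite (eq_bigr (fun y => \sum_z (r y z == a)%:R * ev v z)); last by move=> y _; rewrite ev_adj.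
  rewrite exchange_big /= sum_blocks big1 // => l _.
  rewrite (eq_bigr (fun z => (#|[set y | (r x y == m) && (r y (rep l) == a)]|)%:R * ev v z)).
    by rewrite -mulr_sumr Hv mulr0.
  move=> z; rewrite inE => /eqP Hz; rewrite -mulr_suml sum_nat_card; congr (_%:R * _).
  rewrite -(col_lemma m a (z := z)); last by rewrite Hz rep_in.
  by apply: eq_card => y; rewrite !inE.
- move=> S cS v Hb Hsp y Hy; rewrite ev_adj sum_blocks big1 // => l _.
  case: (boolP (l \in S)) => lS.
    have rc z : z \in Xr l -> r y z = r y (rep l).
      rewrite inE => /eqP Hz; apply/eqP; apply: contraNT Hy => ne.
      by apply: (cS y z (rep l)); rewrite ?rep_in ?Hz.
    rewrite (eq_bigr (fun z => (r y (rep l) == a)%:R * ev v z)); last by move=> z /rc ->.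
    by rewrite -mulr_sumr Hb mulr0.
  rewrite big1 // => z; rewrite inE => /eqP Hz; rewrite Hsp ?mulr0 //; by rewrite Hz.
Qed.

Lemma dual_Good a : Good (E_ a).
Proof.
split.
- by move=> v Hv y y' e; rewrite !ev_dual e (Hv _ _ e).
- move=> v Hv m; rewrite (eq_bigr (fun y => (m == a)%:R * ev v y)).
    by rewrite -mulr_sumr Hv mulr0.
  by move=> y; rewrite inE => /eqP Hy; rewrite ev_dual Hy.
- by move=> S cS v Hb Hsp y Hy; rewrite ev_dual Hsp ?mulr0.
Qed.

Lemma Good1 : Good 1%:M.
Proof. by split=> [v|v|S _ v _]; rewrite mul1mx. Qed.

Lemma GoodD M N : Good M -> Good N -> Good (M + N).
Proof.
case=> [M1 M2 M3] [N1 N2 N3]; split.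
- by move=> v Hv y y' e; rewrite mulmxDl !ev_add (M1 v Hv y y' e) (N1 v Hv y y' e).
- by move=> v Hv a; rewrite mulmxDl (eq_bigr _ (fun y _ => ev_add _ _ y)) big_split /= (M2 v Hv a) (N2 v Hv a) addr0.
- by move=> S cS v Hb Hsp y Hy; rewrite mulmxDl ev_add (M3 S cS v Hb Hsp y Hy) (N3 S cS v Hb Hsp y Hy) addr0.
Qed.

Lemma GoodZ c M : Good M -> Good (c *: M).
Proof.
case=> [M1 M2 M3]; split.
- by move=> v Hv y y' e; rewrite -scalemxAl !ev_scale (M1 v Hv y y' e).
- by move=> v Hv a; rewrite -scalemxAl (eq_bigr _ (fun y _ => ev_scale _ _ y)) -mulr_sumr (M2 v Hv a) mulr0.
- by move=> S cS v Hb Hsp y Hy; rewrite -scalemxAl ev_scale (M3 S cS v Hb Hsp y Hy) mulr0.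
Qed.

Lemma GoodM M N : Good M -> Good N -> Good (M *m N).
Proof.
case=> [M1 M2 M3] [N1 N2 N3]; split.
- by move=> v Hv; rewrite -mulmxA; apply/M1/N1.
- by move=> v Hv; rewrite -mulmxA; apply/M2/N2.
- by move=> S cS v Hb Hsp; rewrite -mulmxA; apply: M3 => //; [apply: N2|apply: N3].
Qed.

Lemma terw_Good M : terw r x M -> Good M.
Proof.
elim=> [N [a [->|->]]|||c N _ IH|N1 N2 _ IH1 _ IH2].
- exact: adj_Good.
- exact: dual_Good.
- exact: Good1.
- by move=> ? ? _ ? _ ?; apply: GoodD.
- exact: GoodZ.
- exact: GoodM.
Qed.


Definition ind l := mkv (fun y => (r x y == l)%:R).
Definition w l := mkv (fun y => (y == rep l)%:R - (y == oth l)%:R).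
Definition ee y := mkv (fun z => (z == y)%:R).

Lemma ind_V0 l : inV0 (ind l).
Proof. by move=> y y' e; rewrite !evK e. Qed.

Lemma ev_ind_rep i l : ev (ind l) (rep i) = (i == l)%:R.
Proof. by rewrite evK rep_in. Qed.

Lemma rep_eq i l : (rep i == rep l) = (i == l).
Proof.
apply/eqP/eqP => [e|->] //; by rewrite -(rep_in i) e rep_in.
Qed.

Lemma oth_neq i l : #|Xr l| = 2%N -> (rep i == oth l) = false.
Proof.
move=> H2; have [o1 o2] := oth_in H2; apply/negP => /eqP e.
have il : i = l by rewrite -(rep_in i) e o1.
by subst; rewrite e eqxx in o2.
Qed.

Lemma ev_w_rep i l : #|Xr l| = 2%N -> ev (w l) (rep i) = (i == l)%:R.
Proof. by move=> H2; rewrite evK rep_eq oth_neq // subr0. Qed.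

Lemma w_bs0 l : #|Xr l| = 2%N -> bs0 (w l).
Proof.
move=> H2 a; have [o1 o2] := oth_in H2.
rewrite (eq_bigr _ (fun y _ => evK _ y)) sumrB !sum_eq1 !inE rep_in o1.
by rewrite subrr.
Qed.

Lemma w_supp (S : {set 'I_d.+1}) l : #|Xr l| = 2%N -> l \in S -> supp S (w l).
Proof.
move=> H2 lS y Hy; have [o1 o2] := oth_in H2; rewrite evK.
have n1 : (y == rep l) = false by apply/negP => /eqP e; rewrite e rep_in lS in Hy.
have n2 : (y == oth l) = false by apply/negP => /eqP e; rewrite e o1 lS in Hy.
by rewrite n1 n2 subrr.
Qed.

Lemma V0dec v : inV0 v -> v = \sum_l ev v (rep l) *: ind l.
Proof.
move=> Hv; apply: vec_ext => y; rewrite ev_sum (bigD1 (r x y)) //= big1.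
  by rewrite ev_scale evK eqxx mulr1 addr0; apply: Hv; rewrite rep_in.
by move=> l nl; rewrite ev_scale evK eq_sym (negbTE nl) mulr0.
Qed.

Lemma Xr2_set m : #|Xr m| = 2%N -> Xr m = rep m |: [set oth m].
Proof.
move=> H2; have [o1 o2] := oth_in H2; apply/setP => y; rewrite !inE.
apply/idP/idP.
  by move/eqP => Hy; case: (Xr2_cases H2 Hy) => ->; rewrite eqxx ?orbT.
by case/orP => /eqP ->; rewrite ?rep_in ?o1.
Qed.

Lemma sum2 m (f : X -> F) : #|Xr m| = 2%N -> \sum_(y in Xr m) f y = f (rep m) + f (oth m).
Proof.
move=> H2; have [o1 o2] := oth_in H2.
by rewrite Xr2_set // big_setU1 ?big_set1 // inE eq_sym.
Qed.

Lemma bs0_oth v m : #|Xr m| = 2%N -> bs0 v -> ev v (oth m) = - ev v (rep m).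
Proof.
move=> H2 Hv; move: (Hv m); rewrite sum2 // => /eqP.
by rewrite addrC addr_eq0 => /eqP.
Qed.

Lemma Wdec (S : {set 'I_d.+1}) v : (forall l, l \in S -> #|Xr l| = 2%N) -> bs0 v -> supp S v ->
  v = \sum_(l in S) ev v (rep l) *: w l.
Proof.
move=> HS Hb Hsp; apply: vec_ext => y; rewrite ev_sum.
have z0 l : l \in S -> l != r x y -> ev (ev v (rep l) *: w l) y = 0.
  move=> lS nl; rewrite ev_scale evK; have [o1 _] := oth_in (HS l lS).
  have n1 : (y == rep l) = false by apply/negP => /eqP e; rewrite e rep_in eqxx in nl.
  have n2 : (y == oth l) = false by apply/negP => /eqP e; rewrite e o1 eqxx in nl.
  by rewrite n1 n2 subrr mulr0.
case: (boolP (r x y \in S)) => yS; last first.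
  by rewrite Hsp // big1 // => l lS; apply: z0 => //; apply: contraNneq yS => <-.
rewrite (bigD1 (r x y)) //= big1 ?addr0; last by move=> l /andP [lS nl]; apply: z0.
have H2 := HS _ yS; have [o1 o2] := oth_in H2.
rewrite ev_scale evK.
move: H2 o1 o2; set m := r x y => H2 o1 o2.
have Hy : r x y = m by [].
clearbody m.
case: (Xr2_cases H2 Hy) => ->.
  by rewrite eqxx eq_sym (negbTE o2) subr0 mulr1.
by rewrite eqxx (negbTE o2) sub0r mulrN1 -(bs0_oth H2 Hb).
Qed.


Definition phi0 (M : 'M[F]_n) : 'M[F]_d.+1 := \matrix_(i, l) ev (M *m ind l) (rep i).
Definition phiC (C : {set 'I_d.+1}) (M : 'M[F]_n) : 'M[F]_#|C| :=
  \matrix_(s, t) ev (M *m w (enum_val t)) (rep (enum_val s)).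

Lemma phi0_1 : phi0 1%:M = 1%:M.
Proof. by apply/matrixP => i l; rewrite !mxE mul1mx ev_ind_rep. Qed.

Lemma phi0D M N : phi0 (M + N) = phi0 M + phi0 N.
Proof. by apply/matrixP => i l; rewrite !mxE mulmxDl ev_add. Qed.

Lemma phi0Z c M : phi0 (c *: M) = c *: phi0 M.
Proof. by apply/matrixP => i l; rewrite !mxE -scalemxAl ev_scale. Qed.

Lemma phi0M M N : Good N -> phi0 (M *m N) = phi0 M *m phi0 N.
Proof.
case=> N1 _ _; apply/matrixP => i l; rewrite !mxE -mulmxA.
rewrite {1}(V0dec (N1 _ (ind_V0 l))) mulmx_sumr ev_sum.
apply: eq_bigr => m _; rewrite -scalemxAr ev_scale !mxE mulrC.
by [].
Qed.

Lemma phiC_1 (C : {set 'I_d.+1}) : (forall l, l \in C -> #|Xr l| = 2%N) -> phiC C 1%:M = 1%:M.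
Proof.
move=> HC; apply/matrixP => s t; rewrite !mxE mul1mx ev_w_rep; last by apply: HC; apply: enum_valP.
by rewrite (inj_eq enum_val_inj).
Qed.

Lemma phiCD (C : {set 'I_d.+1}) M N : phiC C (M + N) = phiC C M + phiC C N.
Proof. by apply/matrixP => i l; rewrite !mxE mulmxDl ev_add. Qed.

Lemma phiCZ (C : {set 'I_d.+1}) c M : phiC C (c *: M) = c *: phiC C M.
Proof. by apply/matrixP => i l; rewrite !mxE -scalemxAl ev_scale. Qed.

Lemma phiCM (C : {set 'I_d.+1}) M N : (forall l, l \in C -> #|Xr l| = 2%N) -> closedS C -> Good N ->
  phiC C (M *m N) = phiC C M *m phiC C N.
Proof.
move=> HC cC [_ N2 N3]; apply/matrixP => s t; rewrite !mxE -mulmxA.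
have Ht := HC _ (enum_valP t).
rewrite {1}(@Wdec C (N *m w (enum_val t))) //; first last.
- by apply: N3 => //; [apply: w_bs0 | apply: w_supp => //; apply: enum_valP].
- by apply: N2; apply: w_bs0.
rewrite mulmx_sumr ev_sum big_enum_val /=.
apply: eq_bigr => u _; rewrite -scalemxAr ev_scale !mxE mulrC.
by [].
Qed.


Lemma ev_ee M y y' : ev (M *m ee y) y' = M (enum_rank y') (enum_rank y).
Proof.
rewrite ev_mul (bigD1 y) //= big1 ?addr0; first by rewrite evK eqxx mulr1.
by move=> z nz; rewrite evK (negbTE nz) mulr0.
Qed.

Lemma mx_ext (M N : 'M[F]_n) : (forall y, M *m ee y = N *m ee y) -> M = N.
Proof.
move=> H; apply/matrixP => i j.
have := congr1 (fun v => ev v (enum_val i)) (H (enum_val j)).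
by rewrite /= !ev_ee !enum_valK.
Qed.

Lemma ee_single y : #|Xr (r x y)| = 1%N -> ee y = ind (r x y).
Proof.
move=> H1; apply: vec_ext => z; rewrite !evK.
case/cards1P: (introT eqP H1) => a Ha.
suff -> : (z == y) = (r x z == r x y) by [].
apply/eqP/eqP => [->//|e].
have : y \in Xr (r x y) by rewrite inE.
have : z \in Xr (r x y) by rewrite inE e.
by rewrite Ha !inE => /eqP -> /eqP ->.
Qed.

Lemma ee_rep m : #|Xr m| = 2%N -> 2%:R *: ee (rep m) = ind m + w m.
Proof.
move=> H2; have [o1 o2] := oth_in H2; apply: vec_ext => z.
have o3 : (rep m == oth m) = false by rewrite eq_sym (negbTE o2).
have o4 := negbTE o2.
rewrite ev_scale ev_add /ind /w /ee !evK.
case: (boolP (r x z == m)) => hz.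
  case: (Xr2_cases H2 (eqP hz)) => ->; rewrite ?rep_in ?o1 !eqxx ?o3 ?o4 /=; ring.
have n1 : (z == rep m) = false by apply/negP => /eqP e; rewrite e rep_in eqxx in hz.
have n2 : (z == oth m) = false by apply/negP => /eqP e; rewrite e o1 eqxx in hz.
rewrite n1 n2 ?(negbTE hz) /=; ring.
Qed.

Lemma ee_oth m : #|Xr m| = 2%N -> 2%:R *: ee (oth m) = ind m - w m.
Proof.
move=> H2; have [o1 o2] := oth_in H2; apply: vec_ext => z.
have o3 : (rep m == oth m) = false by rewrite eq_sym (negbTE o2).
have o4 := negbTE o2.
rewrite ev_scale ev_add ev_opp /ind /w /ee !evK.
case: (boolP (r x z == m)) => hz.
  case: (Xr2_cases H2 (eqP hz)) => ->; rewrite ?rep_in ?o1 !eqxx ?o3 ?o4 /=; ring.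
have n1 : (z == rep m) = false by apply/negP => /eqP e; rewrite e rep_in eqxx in hz.
have n2 : (z == oth m) = false by apply/negP => /eqP e; rewrite e o1 eqxx in hz.
rewrite n1 n2 ?(negbTE hz) /=; ring.
Qed.

Lemma inj_lemma (M N : 'M[F]_n) : (forall l, M *m ind l = N *m ind l) ->
  (forall l, #|Xr l| = 2%N -> M *m w l = N *m w l) -> M = N.
Proof.
move=> Hi Hw; apply: mx_ext => y.
have := Xr_le2 (r x y); have := Xr_gt0 (r x y).
case H: #|Xr (r x y)| => [|[|[|k]]] // _ _.
  by rewrite ee_single.
case: (Xr2_cases H (erefl (r x y))) => ->.
  by apply: (scalerI H2F); rewrite !scalemxAr ee_rep // !mulmxDr Hi Hw.
by apply: (scalerI H2F); rewrite !scalemxAr ee_oth // !mulmxBr Hi Hw.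
Qed.

Definition cls b : {set 'I_d.+1} := [set c | (#|Xr c| == 2%N) && connect Erel b c].
Definition classb (C : {set 'I_d.+1}) := [exists b, (#|Xr b| == 2%N) && (C == cls b)].

Lemma is_classP C : is_class r C <-> classb C.
Proof.
split.
  case=> b [/A2E Hb HC]; apply/existsP; exists b; rewrite Hb eqxx /=.
  apply/eqP/setP => c; rewrite inE; apply/idP/idP.
    by case/HC => /A2E Hc /sim_connect -/(_ Hb Hc) ->; rewrite Hc eqxx.
  case/andP => /eqP Hc Hcon; apply/HC; split; first by apply/A2E.
  by apply/sim_connect.
case/existsP => b /andP [/eqP Hb /eqP ->]; exists b; split; first by apply/A2E.
move=> c; rewrite inE; split.
  case/andP => /eqP Hc Hcon; split; first by apply/A2E.
  by apply/sim_connect.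
by case=> /A2E Hc /sim_connect -/(_ Hb Hc) ->; rewrite Hc eqxx.
Qed.

Lemma cls_A2 b l : l \in cls b -> #|Xr l| = 2%N.
Proof. by rewrite inE => /andP [/eqP]. Qed.

Lemma cls_closed b : closedS (cls b).
Proof.
move=> y p q epq; rewrite !inE => /andP [_ Hc] ne.
have HE : E (r x y) (r x p).
  by apply/existsP; exists y; apply/existsP; exists p; apply/existsP; exists q; rewrite epq !eqxx.
rewrite (E_A2l HE) eqxx /=; apply: (connect_trans Hc); apply: connect1.
exact: E_sym.
Qed.

Lemma cls_self l : #|Xr l| = 2%N -> l \in cls l.
Proof. by move=> H; rewrite inE H eqxx connect0. Qed.

Lemma cls_conn b i l : i \in cls b -> l \in cls b -> connect Erel l i.
Proof.
rewrite !inE => /andP [_ Hi] /andP [_ Hl].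
by apply: connect_trans Hi; rewrite (sym_connect_sym Erel_sym).
Qed.

Lemma cls_eq b b' c : c \in cls b -> c \in cls b' -> cls b = cls b'.
Proof.
rewrite !inE => /andP [_ H1] /andP [_ H2]; apply/setP => e; rewrite !inE.
have sy := sym_connect_sym Erel_sym.
congr (_ && _); apply/idP/idP => H.
  by apply: connect_trans H; apply: connect_trans H2 _; rewrite sy.
by apply: connect_trans H; apply: connect_trans H1 _; rewrite sy.
Qed.


Local Notation T := (@terw F X d r x).

Lemma terw_adj a : T (A_ a).
Proof. by apply: ga_gen; exists a; left. Qed.

Lemma terw_dual a : T (E_ a).
Proof. by apply: ga_gen; exists a; right. Qed.

Lemma terw0 : T 0.
Proof. by rewrite -(scale0r 1%:M); apply: ga_scale; apply: ga_one. Qed.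

Lemma terw_sum I (s : seq I) (P : pred I) (G : I -> 'M[F]_n) :
  (forall i, P i -> T (G i)) -> T (\sum_(i <- s | P i) G i).
Proof.
move=> H; apply: (big_ind T) => //; [exact: terw0 | by move=> ? ? ? ?; apply: ga_add].
Qed.

Definition Jm : 'M[F]_n := \sum_a A_ a.

Lemma terw_J : T Jm.
Proof. by apply: terw_sum => a _; apply: terw_adj. Qed.

Lemma sum_eqI (c : 'I_d.+1) : \sum_a (c == a)%:R = 1 :> F.
Proof.
rewrite (bigD1 c) //= eqxx big1 ?addr0 // => a na.
by rewrite eq_sym (negbTE na).
Qed.

Lemma ev_J v y : ev (Jm *m v) y = \sum_z ev v z.
Proof.
rewrite /Jm mulmx_suml ev_sum.
rewrite (eq_bigr (fun a => \sum_z (r y z == a)%:R * ev v z)); last by move=> a _; rewrite ev_adj.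
rewrite exchange_big /=; apply: eq_bigr => z _.
by rewrite -mulr_suml sum_eqI mul1r.
Qed.

Lemma sum_Xr (f : X -> F) l : \sum_z (r x z == l)%:R * f z = \sum_(z in Xr l) f z.
Proof.
rewrite [RHS]big_mkcond /=; apply: eq_bigr => z _; rewrite inE.
by case: eqP => _; rewrite ?mul1r ?mul0r.
Qed.

Lemma sum_delta (f : X -> F) p : \sum_z f z * (z == p)%:R = f p.
Proof.
rewrite (bigD1 p) //= eqxx mulr1 big1 ?addr0 // => z nz.
by rewrite (negbTE nz) mulr0.
Qed.

Lemma kl_neq0 l : (#|Xr l|%:R : F) != 0.
Proof.
have := Xr_le2 l; have := Xr_gt0 l.
case: #|Xr l| => [|[|[|k]]] // _ _; first by rewrite oner_neq0.
Qed.

Definition U i l : 'M[F]_n := (#|Xr l|%:R)^-1 *: (E_ i *m Jm *m E_ l).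

Lemma terw_U i l : T (U i l).
Proof.
have := terw_dual i; have := terw_dual l; have := terw_J; rewrite /terw => h1 h2 h3.
by apply: ga_scale; apply: ga_mul => //; apply: ga_mul.
Qed.

Lemma ev_U i l v y : ev (U i l *m v) y =
  (#|Xr l|%:R)^-1 * ((r x y == i)%:R * \sum_(z in Xr l) ev v z).
Proof.
rewrite -scalemxAl ev_scale -!mulmxA ev_dual ev_J.
by rewrite (eq_bigr _ (fun z _ => ev_dual _ _ z)) sum_Xr.
Qed.

Lemma U_ind i l m : U i l *m ind m = (m == l)%:R *: ind i.
Proof.
apply: vec_ext => y; rewrite ev_U ev_scale evK.
rewrite (eq_bigr (fun _ => (l == m)%:R)); last by move=> z; rewrite inE evK => /eqP ->.
rewrite sumr_const; case: (boolP (m == l)) => [/eqP ->|nml].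
  rewrite eqxx; move: (kl_neq0 l) => kn; field.
  by rewrite kn.
by rewrite [l == m]eq_sym (negbTE nml) /= mul0rn !mulr0 mul0r.
Qed.

Lemma U_w i l m : #|Xr m| = 2%N -> U i l *m w m = 0.
Proof.
move=> H2; apply: vec_ext => y; rewrite ev_U ev0 (w_bs0 H2).
by rewrite !mulr0.
Qed.

Definition Pl l : 'M[F]_n := E_ l - U l l.

Lemma terw_Pl l : T (Pl l).
Proof.
have := terw_dual l; have := terw_U l l; rewrite /terw => h1 h2.
by rewrite /Pl -scaleN1r; apply: ga_add => //; apply: ga_scale.
Qed.

Lemma w_loc m y : #|Xr m| = 2%N -> ev (w m) y = (r x y == m)%:R * ev (w m) y.
Proof.
move=> H2; have [o1 _] := oth_in H2.
case: (boolP (r x y == m)) => hy; first by rewrite mul1r.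
rewrite mul0r /w evK.
have n1 : (y == rep m) = false by apply/negP => /eqP e; rewrite e rep_in eqxx in hy.
have n2 : (y == oth m) = false by apply/negP => /eqP e; rewrite e o1 eqxx in hy.
by rewrite n1 n2 subrr.
Qed.


Lemma Pl_ind l m : Pl l *m ind m = 0.
Proof.
rewrite /Pl mulmxBl U_ind; apply: vec_ext => y.
rewrite ev_add ev_opp ev_dual ev_scale !evK ev0.
case: (boolP (r x y == l)) => [/eqP ->|hl]; first by rewrite [l == m]eq_sym /=; ring.
by rewrite /=; ring.
Qed.

Lemma Pl_w l m : #|Xr m| = 2%N -> Pl l *m w m = (m == l)%:R *: w m.
Proof.
move=> H2; rewrite /Pl mulmxBl U_w // subr0; apply: vec_ext => y.
rewrite ev_dual ev_scale w_loc // [in RHS]w_loc // !mulrA.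
case: (boolP (r x y == m)) => [/eqP ->|hm] /=; ring.
Qed.

Definition Op (M : 'M[F]_n) i l := [/\ T M, forall m, M *m ind m = 0 &
  forall m, #|Xr m| = 2%N -> M *m w m = (m == l)%:R *: w i].

Lemma Op_P l : Op (Pl l) l l.
Proof.
split; [exact: terw_Pl | exact: Pl_ind | move=> m H2; rewrite Pl_w //].
by case: (boolP (m == l)) => [/eqP ->|_] //; rewrite !scale0r.
Qed.


Lemma EA_w v l : E v l -> E_ v *m (A_ (r (rep v) (rep l)) *m w l) = w v.
Proof.
move=> HE; have Hv := E_A2l HE; have Hl := E_A2r HE.
have [o1 o2] := oth_in Hl.
set j := r (rep v) (rep l).
have [_ Gd2 _] := dual_Good v; have [_ Ga2 _] := adj_Good j.
set u := E_ v *m (A_ j *m w l).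
rewrite (@Wdec [set v] u).
- rewrite big_set1.
  suff -> : ev u (rep v) = 1 by rewrite scale1r.
  rewrite /u ev_dual rep_in eqxx mul1r ev_adj.
  rewrite (eq_bigr (fun z => (r (rep v) z == j)%:R * (z == rep l)%:R - (r (rep v) z == j)%:R * (z == oth l)%:R)); last first.
    by move=> z _; rewrite /w evK mulrBr.
  rewrite sumrB !sum_delta eqxx.
  have ne : r (rep v) (rep l) != r (rep v) (oth l) by apply: (E_rows HE); rewrite ?rep_in // eq_sym.
  by rewrite eq_sym (negbTE ne) subr0.
- by move=> l'; rewrite inE => /eqP ->.
- by apply: Gd2; apply: Ga2; apply: w_bs0.
- by move=> y; rewrite inE => hy; rewrite /u ev_dual (negbTE hy) mul0r.
Qed.

Definition Nm v l : 'M[F]_n := E_ v *m A_ (r (rep v) (rep l)) *m Pl l.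

Lemma Op_N v l : E v l -> Op (Nm v l) v l.
Proof.
move=> HE; split.
- have := terw_dual v; have := terw_adj (r (rep v) (rep l)); have := terw_Pl l.
  by rewrite /terw => h1 h2 h3; apply: ga_mul => //; apply: ga_mul.
- by move=> m; rewrite /Nm -mulmxA Pl_ind mulmx0.
- move=> m H2; rewrite /Nm -mulmxA Pl_w // -scalemxAr.
  case: (boolP (m == l)) => [/eqP ->|_]; last by rewrite !scale0r.
  by rewrite -mulmxA EA_w.
Qed.

Lemma Op_comp M N i m l : #|Xr m| = 2%N -> Op M i m -> Op N m l -> Op (M *m N) i l.
Proof.
move=> Hm [M1 M2 M3] [N1 N2 N3]; split.
- by move: M1 N1; rewrite /terw => h1 h2; apply: ga_mul.
- by move=> m'; rewrite -mulmxA N2 mulmx0.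
- move=> m' H2; rewrite -mulmxA N3 // -scalemxAr M3 // eqxx scale1r.
  by [].
Qed.

Lemma Op_path p l : #|Xr l| = 2%N -> path Erel l p -> exists M, Op M (last l p) l.
Proof.
elim: p l => [|v p IH] l Hl /=; first by move=> _; exists (Pl l); apply: Op_P.
case/andP => HE pth.
have Hv := E_A2r HE.
have [M HM] := IH v Hv pth.
exists (M *m Nm v l); apply: (Op_comp Hv HM); apply: Op_N; exact: E_sym.
Qed.

Lemma Op_cls b i l : i \in cls b -> l \in cls b -> exists M, Op M i l.
Proof.
move=> Hi Hl; have := cls_conn Hi Hl; case/connectP => p pth ->.
by apply: Op_path => //; apply: cls_A2 Hl.
Qed.


Lemma phi00 : phi0 0 = 0.
Proof. by apply/matrixP => i l; rewrite !mxE mul0mx ev0. Qed.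

Lemma phiC0 (C : {set 'I_d.+1}) : phiC C 0 = 0.
Proof. by apply/matrixP => i l; rewrite !mxE mul0mx ev0. Qed.

Lemma phi0_sum I (s : seq I) (P : pred I) (G : I -> 'M[F]_n) :
  phi0 (\sum_(i <- s | P i) G i) = \sum_(i <- s | P i) phi0 (G i).
Proof. exact: (big_morph phi0 phi0D phi00). Qed.

Lemma phiC_sum (C : {set 'I_d.+1}) I (s : seq I) (P : pred I) (G : I -> 'M[F]_n) :
  phiC C (\sum_(i <- s | P i) G i) = \sum_(i <- s | P i) phiC C (G i).
Proof. exact: (big_morph (phiC C) (phiCD C) (phiC0 C)). Qed.

Lemma classbE C : classb C -> exists b, #|Xr b| = 2%N /\ C = cls b.
Proof. by case/existsP => b /andP [/eqP H /eqP ->]; exists b. Qed.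

Lemma Wsig (C : {set 'I_d.+1}) (s t : 'I_#|C|) :
  {M | classb C -> Op M (enum_val s) (enum_val t)}.
Proof.
apply: constructive_indefinite_description.
case hC: (classb C); last by exists 0.
have [b [Hb EC]] := classbE hC.
have Hs' : enum_val s \in cls b by rewrite -EC; apply: enum_valP.
have Ht : enum_val t \in cls b by rewrite -EC; apply: enum_valP.
have [M HM] := Op_cls Hs' Ht; by exists M.
Qed.

Definition Wop (C : {set 'I_d.+1}) (s t : 'I_#|C|) := proj1_sig (Wsig s t).

Lemma WopP (C : {set 'I_d.+1}) (s t : 'I_#|C|) : classb C -> Op (Wop s t) (enum_val s) (enum_val t).
Proof. exact: (proj2_sig (Wsig s t)). Qed.

Lemma alg_hom_phi0 : alg_hom_on T phi0.
Proof.
split; [exact: phi0_1 | by move=> *; apply: phi0D | by move=> *; apply: phi0Z |].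
by move=> A B _ HB; apply: phi0M; apply: terw_Good.
Qed.

Lemma alg_hom_phiC C : classb C -> alg_hom_on T (phiC C).
Proof.
move=> hC; have [b [Hb EC]] := classbE hC.
have HC l : l \in C -> #|Xr l| = 2%N by rewrite EC; apply: cls_A2.
split; [exact: phiC_1 | by move=> *; apply: phiCD | by move=> *; apply: phiCZ |].
move=> A B _ HB; apply: phiCM => //; last exact: terw_Good.
rewrite EC; exact: cls_closed.
Qed.

Lemma inj_main A B : T A -> T B -> phi0 A = phi0 B ->
  (forall C, classb C -> phiC C A = phiC C B) -> A = B.
Proof.
move=> TA TB H0 HC.
have [GA1 GA2 GA3] := terw_Good TA; have [GB1 GB2 GB3] := terw_Good TB.
apply: inj_lemma.
  move=> l; rewrite (V0dec (GA1 _ (ind_V0 l))) (V0dec (GB1 _ (ind_V0 l))).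
  apply: eq_bigr => i _; congr (_ *: _).
  by have := congr1 (fun M : 'M[F]_d.+1 => M i l) H0; rewrite /= !mxE.
move=> l Hl.
set C := cls l.
have lC : l \in C by apply: cls_self.
have hC : classb C by apply/existsP; exists l; rewrite Hl !eqxx.
have HS m : m \in C -> #|Xr m| = 2%N by apply: cls_A2.
have cC : closedS C by apply: cls_closed.
rewrite (@Wdec C (A *m w l)) //; first last.
- by apply: GA3 => //; [apply: w_bs0|apply: w_supp].
- by apply: GA2; apply: w_bs0.
rewrite (@Wdec C (B *m w l)) //; first last.
- by apply: GB3 => //; [apply: w_bs0|apply: w_supp].
- by apply: GB2; apply: w_bs0.
apply: eq_bigr => m mC; congr (_ *: _).
have := congr1 (fun M : 'M[F]_#|C| => M (enum_rank_in lC m) (enum_rank_in lC l)) (HC C hC).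
by rewrite /= !mxE !(enum_rankK_in lC).
Qed.


Lemma terw_add A B : T A -> T B -> T (A + B).
Proof. exact: ga_add. Qed.

Lemma terw_scale c A : T A -> T (c *: A).
Proof. exact: ga_scale. Qed.

Lemma phi0_U i l : phi0 (U i l) = delta_mx i l.
Proof.
apply/matrixP => i' l'; rewrite !mxE U_ind ev_scale ev_ind_rep.
by case: (i' == i); case: (l' == l); rewrite /= ?mulr1 ?mulr0.
Qed.

Lemma phiC_U C i l : classb C -> phiC C (U i l) = 0.
Proof.
move=> hC; have [b [Hb EC]] := classbE hC.
apply/matrixP => s t; rewrite !mxE U_w ?ev0 //.
by apply: (@cls_A2 b); rewrite -EC; apply: enum_valP.
Qed.

Lemma phi0_W (C : {set 'I_d.+1}) (s t : 'I_#|C|) : classb C -> phi0 (Wop s t) = 0.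
Proof.
move=> hC; have [_ W2 _] := WopP s t hC.
by apply/matrixP => i l; rewrite !mxE W2 ev0.
Qed.

Lemma phiC_W_same (C : {set 'I_d.+1}) (s t : 'I_#|C|) : classb C -> phiC C (Wop s t) = delta_mx s t.
Proof.
move=> hC; have [_ _ W3] := WopP s t hC; have [b [Hb EC]] := classbE hC.
have HA (u : 'I_#|C|) : #|Xr (enum_val u)| = 2%N by apply: (@cls_A2 b); rewrite -EC; apply: enum_valP.
apply/matrixP => s' t'; rewrite !mxE W3 // ev_scale ev_w_rep // !(inj_eq enum_val_inj).
by case: (s' == s); case: (t' == t); rewrite /= ?mulr1 ?mulr0.
Qed.

Lemma phiC_W_diff (C C' : {set 'I_d.+1}) (s t : 'I_#|C'|) : classb C -> classb C' -> C' != C ->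
  phiC C (Wop s t) = 0.
Proof.
move=> hC hC' ne; have [_ _ W3] := WopP s t hC'; have [b [Hb EC]] := classbE hC.
have [b' [Hb' EC']] := classbE hC'.
apply/matrixP => s' t'; rewrite !mxE W3; last first.
  by apply: (@cls_A2 b); rewrite -EC; apply: enum_valP.
case: eqP => [e|_]; last by rewrite scale0r ev0.
have h1 : enum_val t' \in cls b by rewrite -EC; apply: enum_valP.
have h2 : enum_val t' \in cls b' by rewrite e -EC'; apply: enum_valP.
by case/negP: ne; rewrite EC EC' (cls_eq h1 h2).
Qed.

Lemma surj_main (B0 : 'M[F]_d.+1) (B : forall C : {set 'I_d.+1}, 'M[F]_#|C|) :
  exists A, [/\ T A, phi0 A = B0 & forall C, classb C -> phiC C A = B C].
Proof.
exists (\sum_i \sum_l B0 i l *: U i l +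
        \sum_(C | classb C) \sum_(s < #|C|) \sum_(t < #|C|) B C s t *: Wop s t).
split.
- apply: terw_add.
    by apply: terw_sum => i _; apply: terw_sum => l _; apply: terw_scale; apply: terw_U.
  apply: terw_sum => C hC; apply: terw_sum => s _; apply: terw_sum => t _.
  by apply: terw_scale; case: (WopP s t hC).
- rewrite phi0D !phi0_sum.
  rewrite [X in _ + X]big1 ?addr0; last first.
    move=> C hC; rewrite ?phi0_sum; apply: big1 => s _; rewrite ?phi0_sum; apply: big1 => t _.
    by rewrite phi0Z phi0_W // scaler0.
  rewrite [RHS]matrix_sum_delta; apply: eq_bigr => i _; rewrite ?phi0_sum; apply: eq_bigr => l _.
  by rewrite phi0Z phi0_U.
- move=> C hC; rewrite phiCD !phiC_sum.
  rewrite big1 ?add0r; last first.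
    move=> i _; rewrite ?phiC_sum; apply: big1 => l _.
    by rewrite phiCZ phiC_U // scaler0.
  rewrite (bigD1 C) //= [X in _ + X]big1 ?addr0; last first.
    move=> C' /andP [hC' ne]; rewrite ?phiC_sum; apply: big1 => s _; rewrite ?phiC_sum; apply: big1 => t _.
    by rewrite phiCZ phiC_W_diff // scaler0.
  rewrite [RHS]matrix_sum_delta; rewrite ?phiC_sum; apply: eq_bigr => s _; rewrite ?phiC_sum; apply: eq_bigr => t _.
  by rewrite phiCZ phiC_W_same.
Qed.

End Comb.

End SubmissionDev.
Import SubmissionDev.

Local Open Scope ring_scope.

Theorem corollary7p16 (F : closedFieldType) (X : finType) (d : nat)
  (r : X -> X -> 'I_d.+1) (x : X) :
  (2 \notin [pchar F])%N ->
  is_scheme r -> quasi_thin r -> (exists a, A2 r a) ->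
  (* ~ is an equivalence relation on A2 *)
  ((forall b, A2 r b -> sim r b b) /\
   (forall b c, A2 r b -> A2 r c -> sim r b c -> sim r c b) /\
   (forall b c e, A2 r b -> A2 r c -> A2 r e -> sim r b c -> sim r c e -> sim r b e)) /\
  (* T(x) is isomorphic to M_{d+1}(F) (+) the direct sum over the classes C of M_{|C|}(F) *)
  exists (phi0 : 'M[F]_#|X| -> 'M[F]_d.+1)
         (phi : forall C : {set 'I_d.+1}, 'M[F]_#|X| -> 'M[F]_#|C|),
    [/\ alg_hom_on (@terw F _ _ r x) phi0,
        (forall C, is_class r C -> alg_hom_on (@terw F _ _ r x) (phi C)),
        (forall A B, @terw F _ _ r x A -> @terw F _ _ r x B ->
           phi0 A = phi0 B -> (forall C, is_class r C -> phi C A = phi C B) -> A = B)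
      & (forall (B0 : 'M[F]_d.+1) (B : forall C : {set 'I_d.+1}, 'M[F]_#|C|),
           exists A, [/\ @terw F _ _ r x A, phi0 A = B0 &
                         forall C, is_class r C -> phi C A = B C])].
Proof.
move=> h2 Hs Hqt _.
have H2F : (2%:R : F) != 0.
  by move: h2; rewrite inE /=.
split.
  split; [|split].
  - by move=> b /(A2E x Hs) Hb; apply: (sim_refl Hs Hqt Hb).
  - by move=> b c /(A2E x Hs) Hb /(A2E x Hs) Hc; apply: (sim_sym Hs Hqt Hb Hc).
  - move=> b c e /(A2E x Hs) Hb /(A2E x Hs) Hc /(A2E x Hs) He.
    exact: (sim_trans Hs Hqt Hb Hc He).
exists (phi0 r x (F:=F)), (fun C => phiC r x (F:=F) C).
split.
- exact: alg_hom_phi0.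
- by move=> C /(is_classP x Hs Hqt) hC; apply: alg_hom_phiC.
- move=> A B TA TB H0 HC; apply: (inj_main Hs Hqt H2F TA TB H0) => C hC.
  by apply: HC; apply/(is_classP x Hs Hqt).
- move=> B0 B; have [A [TA e0 eC]] := surj_main x Hs Hqt H2F B0 B.
  by exists A; split => // C /(is_classP x Hs Hqt); apply: eC.
Qed.
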